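(* Let $\mathcal G$ be a cluster graph on $l$ vertices consisting of $m$ clusters, and let $L_{\mathrm{nrm}}=C^{-1/2}(D-A)C^{-1/2}$ be its normalized Laplacian, where $A$ is the adjacency matrix, $D$ the degree matrix and $C=D+I$. Let $N\in\mathbb R^{l\times l}$ be a symmetric matrix, let $\tilde L_{\mathrm{nrm}}=L_{\mathrm{nrm}}+N$, and let $\tilde m$ be the number of eigenvalues of $\tilde L_{\mathrm{nrm}}$ (counted with multiplicity) that are less than $0.5$. If $\|N\|<0.5$, where $\|\cdot\|$ is the induced 2-norm, then $\tilde m=m$.
   Context: A cluster graph is a disjoint union of complete graphs (its clusters). Graphs are undirected without self-loops. *)

(* Defs.v *)
From HB Require Import structures.
From mathcomp Require Import all_boot all_order all_algebra.
From mathcomp Require Import boolp classical_sets reals.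
Set Implicit Arguments. Unset Strict Implicit. Unset Printing Implicit Defensive.
Import Order.TTheory GRing.Theory Num.Theory.
Local Open Scope ring_scope.
Local Open Scope classical_set_scope.

Definition simple_graph (l : nat) (e : rel 'I_l) : Prop :=
  irreflexive e /\ symmetric e.

(* Cluster graph: disjoint union of complete graphs, i.e. "x = y or x ~ y"
   is an equivalence relation (transitivity on distinct vertices). *)
Definition cluster_graph (l : nat) (e : rel 'I_l) : Prop :=
  simple_graph e /\ (forall x y z, e x y -> e y z -> x != z -> e x z).

Definition cluster_of (l : nat) (e : rel 'I_l) (x : 'I_l) : {set 'I_l} :=
  [set y | (y == x) || e x y].
Definition clusters (l : nat) (e : rel 'I_l) : {set {set 'I_l}} :=
  [set cluster_of e x | x : 'I_l].

Definition adj_mx (R : realType) (l : nat) (e : rel 'I_l) : 'M[R]_l :=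
  \matrix_(i, j) (e i j)%:R.
Definition deg (l : nat) (e : rel 'I_l) (i : 'I_l) : nat := #|[set j | e i j]|.
Definition deg_mx (R : realType) (l : nat) (e : rel 'I_l) : 'M[R]_l :=
  diag_mx (\row_i ((deg e i)%:R : R)).
Definition Cinvsqrt_mx (R : realType) (l : nat) (e : rel 'I_l) : 'M[R]_l :=
  diag_mx (\row_i (Num.sqrt ((deg e i)%:R + 1 : R))^-1).
Definition Lnrm (R : realType) (l : nat) (e : rel 'I_l) : 'M[R]_l :=
  Cinvsqrt_mx R e *m (deg_mx R e - adj_mx R e) *m Cinvsqrt_mx R e.

Definition vnorm2 (R : realType) (l : nat) (x : 'cV[R]_l) : R :=
  Num.sqrt (\sum_i x i 0 ^+ 2).
Definition opnorm2 (R : realType) (l : nat) (N : 'M[R]_l) : R :=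
  sup [set vnorm2 (N *m x) | x in [set x : 'cV[R]_l | vnorm2 x = 1]].

(* s lists the eigenvalues of M (with multiplicity): char_poly splits as
   prod_(x <- s) (X - x). *)
Definition eigen_list (R : realType) (l : nat) (M : 'M[R]_l) (s : seq R) : Prop :=
  char_poly M = \prod_(x <- s) ('X - x%:P).

(* Main.v *)
Require Import Defs.
From HB Require Import structures.
From mathcomp Require Import all_boot all_order all_algebra.
From mathcomp Require Import boolp classical_sets reals.
From mathcomp Require Import complex spectral sesquilinear ring lra zify.
Import Order.TTheory GRing.Theory Num.Theory.
Local Open Scope ring_scope.
Set Implicit Arguments. Unset Strict Implicit. Unset Printing Implicit Defensive.

Module Aux.
Local Open Scope sesquilinear_scope.

Lemma tr_idem (F : fieldType) n (A : 'M[F]_n) : A *m A = A -> \tr A = (\rank A)%:R.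
Proof.
move=> AA.
set B := col_base A; set C := row_base A.
have BC : B *m C = A by rewrite mulmx_base.
have Cfree : row_free C by exact: row_base_free.
clearbody B C.
have rB : \rank B = \rank A.
  apply/eqP; rewrite eqn_leq; apply/andP; split; first exact: rank_leq_col.
  by rewrite -{1}BC mxrankM_maxl.
have BTfree : row_free B^T by rewrite /row_free mxrank_tr rB.
have CB : C *m B = 1%:M.
  have h1 : B *m (C *m B - 1%:M) *m C = 0.
    by rewrite mulmxBr mulmxBl mulmx1 !mulmxA BC -mulmxA BC AA subrr.
  have h2 : B *m (C *m B - 1%:M) = 0 by apply/eqP; rewrite -(mulmx_free_eq0 _ Cfree) h1.
  have h3 : (C *m B - 1%:M)^T *m B^T = 0 by rewrite -trmx_mul h2 trmx0.
  have /eqP : (C *m B - 1%:M)^T = 0 by apply/eqP; rewrite -(mulmx_free_eq0 _ BTfree) h3.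
  by rewrite -trmx0 => /eqP/trmx_inj/eqP; rewrite subr_eq0 => /eqP.
by rewrite -[in LHS]BC mxtrace_mulC CB mxtrace1.
Qed.

Lemma rank_idem (F : numFieldType) n (A : 'M[F]_n) k : A *m A = A -> \tr A = k%:R -> \rank A = k.
Proof. by move=> AA; rewrite tr_idem // => /eqP; rewrite eqr_nat => /eqP. Qed.

Lemma char_poly_sim (F : fieldType) n (P Q D : 'M[F]_n) :
  Q *m P = 1%:M -> char_poly (Q *m D *m P) = char_poly D.
Proof.
move=> QP; rewrite /char_poly /char_poly_mx !map_mxM.
set Qp := map_mx _ Q; set Pp := map_mx _ P; set Dp := map_mx _ D.
have QPp : Qp *m Pp = 1%:M by rewrite -map_mxM QP map_mx1.
have -> : ('X%:M : 'M[{poly F}]_n) - Qp *m Dp *m Pp = Qp *m ('X%:M - Dp) *m Pp.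
  rewrite mulmxBr mulmxBl; congr (_ - _).
  by rewrite mul_mx_scalar -scalemxAl QPp -mul_scalar_mx mulmx1.
rewrite !det_mulmx mulrC mulrA -det_mulmx.
by rewrite (mulmx1C QPp) det1 mul1r.
Qed.

Section Real.
Variable R : realType.
Local Notation C := (R[i]).
Local Notation toC := (real_complex R).

Lemma sym_spectral n (M : 'M[R]_n) : M^T = M ->
  exists (P : 'M[C]_n) (r : 'I_n -> R), P \is unitarymx /\
    map_mx toC M = P^t* *m diag_mx (\row_i (toC (r i))) *m P.
Proof.
move=> MT.
set Mc := map_mx toC M.
have Mh : Mc \is hermsymmx.
  apply/is_hermitianmxP; rewrite expr0 scale1r; apply/matrixP => i j.
  rewrite !mxE -[in LHS]MT mxE.
  exact: (esym (conjc_real _)).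
have := hermitian_spectral_diag_real Mh.
have /orthomx_spectralP := hermitian_normalmx Mh.
set P := spectralmx Mc; set d := spectral_diag Mc => Mdef dreal.
exists P, (fun i => complex.Re (d 0 i)); split; first exact: spectral_unitarymx.
rewrite Mdef invmx_unitary ?spectral_unitarymx //; congr (_ *m diag_mx _ *m _).
apply/rowP => i; rewrite mxE RRe_real //.
by apply: (mxOverP dreal).
Qed.

Lemma char_poly_spec n (M : 'M[R]_n) (P : 'M[C]_n) (r : 'I_n -> R) :
  P \is unitarymx ->
  map_mx toC M = P^t* *m diag_mx (\row_i (toC (r i))) *m P ->
  char_poly M = \prod_(i < n) ('X - (r i)%:P).
Proof.
move=> Pu Mdef; apply: (@map_poly_inj _ _ (real_complex R)).
rewrite map_char_poly Mdef char_poly_sim; last exact: mulmx1C (unitarymxP Pu).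
rewrite char_poly_trig ?diag_mx_is_trig // rmorph_prod.
by apply: eq_bigr => i _; rewrite /= map_polyXsubC mxE eqxx mulr1n mxE.
Qed.

End Real.

Ltac simpc := do ?
  [ rewrite -[(_ +i* _)%C - (_ +i* _)%C]/(_ +i* _)%C
  | rewrite -[(_ +i* _)%C + (_ +i* _)%C]/(_ +i* _)%C
  | rewrite -[(_ +i* _)%C * (_ +i* _)%C]/(_ +i* _)%C].

Section Real.
Variable R : realType.
Local Notation C := (R[i]).
Local Notation toC := (real_complex R).

Lemma Re_sum (I : Type) (r : seq I) (P : pred I) (F : I -> C) :
  complex.Re (\sum_(i <- r | P i) F i) = \sum_(i <- r | P i) complex.Re (F i).
Proof. by apply: (big_morph _ (fun x y => _) (erefl _)) => -[? ?] [? ?]. Qed.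
Lemma Im_sum (I : Type) (r : seq I) (P : pred I) (F : I -> C) :
  complex.Im (\sum_(i <- r | P i) F i) = \sum_(i <- r | P i) complex.Im (F i).
Proof. by apply: (big_morph _ (fun x y => _) (erefl _)) => -[? ?] [? ?]. Qed.

Lemma quadN n (N : 'M[R]_n) (v : 'rV[C]_n) : N^T = N ->
  (v *m map_mx toC N *m v^t*) 0 0 =
    toC (\sum_i \sum_j complex.Re (v 0 i) * N i j * complex.Re (v 0 j)
       + \sum_i \sum_j complex.Im (v 0 i) * N i j * complex.Im (v 0 j)).
Proof.
move=> NT.
have -> : (v *m map_mx toC N *m v^t*) 0 0 =
   \sum_j \sum_i v 0 i * toC (N i j) * (v 0 j)^*.
  rewrite mxE; apply: eq_bigr => j _; rewrite !mxE mulr_suml.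
  by apply: eq_bigr => i _; rewrite !mxE.
apply/eqP; rewrite eq_complex; apply/andP; split; apply/eqP.
- rewrite Re_sum /=; under eq_bigr do rewrite Re_sum.
  rewrite exchange_big -big_split /=; apply: eq_bigr => i _.
  rewrite -big_split /=; apply: eq_bigr => j _.
  case: (v 0 i) => a1 b1; case: (v 0 j) => a2 b2 /=.
  by ring.
- rewrite Im_sum /=; under eq_bigr do rewrite Im_sum.
  have NE i j : N i j = N j i by rewrite -[in LHS]NT mxE.
  transitivity (\sum_j \sum_i (complex.Im (v 0 i) * N i j * complex.Re (v 0 j))
      - \sum_j \sum_i (complex.Re (v 0 i) * N i j * complex.Im (v 0 j))).
    rewrite -sumrB; apply: eq_bigr => j _; rewrite -sumrB; apply: eq_bigr => i _.
    case: (v 0 i) => a1 b1; case: (v 0 j) => a2 b2 /=.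
    by ring.
  rewrite [X in _ - X]exchange_big /=; apply/eqP; rewrite subr_eq0; apply/eqP.
  apply: eq_bigr => j _; apply: eq_bigr => i _.
  by rewrite NE; ring.
Qed.


Lemma mulcJ (x : C) : x * x^* = toC (complex.Re x ^+ 2 + complex.Im x ^+ 2).
Proof. by case: x => a b; apply/eqP; rewrite eq_complex /=; apply/andP; split; apply/eqP; ring. Qed.

Lemma tconj_mul m k p (A : 'M[C]_(m, k)) (B : 'M[C]_(k, p)) : (A *m B)^t* = B^t* *m A^t*.
Proof. by rewrite trmx_mul map_mxM. Qed.

Lemma quad_sum n (A : 'M[C]_n) (y : 'rV[C]_n) :
  (y *m A *m y^t*) 0 0 = \sum_j (\sum_i y 0 i * A i j) * (y 0 j)^*.
Proof. by rewrite mxE; apply: eq_bigr => j _; rewrite !mxE. Qed.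

Lemma nv_sum n (y : 'rV[C]_n) :
  (y *m y^t*) 0 0 = toC (\sum_i (complex.Re (y 0 i) ^+ 2 + complex.Im (y 0 i) ^+ 2)).
Proof. by rewrite mxE rmorph_sum; apply: eq_bigr => j _; rewrite !mxE mulcJ. Qed.

Lemma nv_eq0 n (y : 'rV[C]_n) :
  \sum_i (complex.Re (y 0 i) ^+ 2 + complex.Im (y 0 i) ^+ 2) = 0 -> y = 0.
Proof.
move=> h; apply/rowP => i; rewrite mxE.
have /psumr_eq0P : forall i, true -> 0 <= complex.Re (y 0 i) ^+ 2 + complex.Im (y 0 i) ^+ 2.
  by move=> j _; rewrite addr_ge0 ?sqr_ge0.
move=> /(_ h i isT) /eqP; rewrite paddr_eq0 ?sqr_ge0 // !sqrf_eq0.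
by case: (y 0 i) => a b /= /andP[/eqP -> /eqP ->].
Qed.

Lemma spec_quad n (P : 'M[C]_n) (r : 'I_n -> R) (g : 'I_n -> bool) (v : 'rV[C]_n) :
  P \is unitarymx ->
  v *m (P^t* *m diag_mx (\row_i (g i)%:R) *m P) = v ->
  exists ny : 'I_n -> R, [/\ forall i, 0 <= ny i, forall i, ~~ g i -> ny i = 0,
     (v *m (P^t* *m diag_mx (\row_i toC (r i)) *m P) *m v^t*) 0 0 = toC (\sum_i r i * ny i) &
     (v *m v^t*) 0 0 = toC (\sum_i ny i)].
Proof.
move=> Pu vE.
have PPt : P *m P^t* = 1%:M by apply/unitarymxP.
have PtP : P^t* *m P = 1%:M by apply: mulmx1C.
set y := v *m P^t*.
have hv : v = y *m P by rewrite /y -mulmxA PtP mulmx1.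
have hy : y = y *m diag_mx (\row_i (g i)%:R).
  by rewrite {1}/y -vE -!mulmxA PPt mulmx1 !mulmxA.
clearbody y.
exists (fun i => complex.Re (y 0 i) ^+ 2 + complex.Im (y 0 i) ^+ 2); split.
- by move=> i; rewrite addr_ge0 ?sqr_ge0.
- move=> i gi; have /rowP /(_ i) := hy.
  move=> h; have -> : y 0 i = 0 by rewrite h mul_mx_diag !mxE (negbTE gi) mulr0.
  by rewrite /= expr0n /= addr0.
- rewrite hv tconj_mul !mulmxA -[y *m P *m P^t*]mulmxA PPt mulmx1.
  rewrite -[y *m diag_mx _ *m P *m P^t*]mulmxA PPt mulmx1 quad_sum rmorph_sum.
  apply: eq_bigr => j _; rewrite (bigD1 j) //= big1 ?addr0; last first.
    by move=> i ij; rewrite [diag_mx _ i j]mxE (negbTE ij) mulr0n mulr0.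
  rewrite [diag_mx _ j j]mxE eqxx mulr1n mxE.
  by rewrite mulrAC mulcJ mulrC -rmorphM.
- by rewrite hv tconj_mul mulmxA -[y *m P *m P^t*]mulmxA PPt mulmx1 nv_sum.
Qed.

End Real.

Section Real.
Variable R : realType.

Definition ss n (x : 'cV[R]_n) := \sum_i x i 0 ^+ 2.

Lemma ss_ge0 n (x : 'cV[R]_n) : 0 <= ss x.
Proof. by apply: sumr_ge0 => i _; rewrite sqr_ge0. Qed.

Lemma ss_eq0 n (x : 'cV[R]_n) : ss x = 0 -> x = 0.
Proof.
move=> h; apply/matrixP => i j; rewrite (ord1 j) mxE.
have /psumr_eq0P := fun i (_ : true) => sqr_ge0 (x i 0).
by move=> /(_ h i isT) /eqP; rewrite sqrf_eq0 => /eqP.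
Qed.

Lemma vnorm2E n (x : 'cV[R]_n) : vnorm2 x = Num.sqrt (ss x).
Proof. by []. Qed.

Lemma abs_le1 (a : R) : a ^+ 2 <= 1 -> `|a| <= 1.
Proof.
move=> h; rewrite -(@ler_sqr _ `|a| 1) ?nnegrE ?normr_ge0 //.
by rewrite real_normK ?num_real // expr1n.
Qed.

Lemma opnorm_ub n (N : 'M[R]_n) (x : 'cV[R]_n) :
  vnorm2 x = 1 -> vnorm2 (N *m x) <= opnorm2 N.
Proof.
move=> x1; apply: sup_upper_bound; last by exists x.
split; first by exists (vnorm2 (N *m x)), x.
exists (Num.sqrt (\sum_i (\sum_j `|N i j|) ^+ 2)).
move=> _ [y /= y1 <-]; rewrite vnorm2E ler_sqrt; last first.
  by apply: sumr_ge0 => i _; rewrite sqr_ge0.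
have ssy : ss y = 1.
  by move: y1; rewrite vnorm2E => /(congr1 (fun t => t ^+ 2)); rewrite sqr_sqrtr ?ss_ge0 // expr1n.
have yb j : `|y j 0| <= 1.
  apply: abs_le1; rewrite -ssy /ss (bigD1 j) //= lerDl.
  by apply: sumr_ge0 => i _; rewrite sqr_ge0.
apply: ler_sum => i _.
rewrite -real_normK ?num_real //; apply: lerXn2r; rewrite ?nnegrE ?normr_ge0 //.
  by apply: sumr_ge0 => j _.
rewrite mxE; apply: le_trans (ler_norm_sum _ _ _) _.
apply: ler_sum => j _; rewrite normrM.
by rewrite -{2}[`|N i j|]mulr1 ler_wpM2l.
Qed.

Lemma opnorm_bound n (N : 'M[R]_n) (x : 'cV[R]_n) :
  ss (N *m x) <= opnorm2 N ^+ 2 * ss x /\ (x != 0 -> 0 <= opnorm2 N).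
Proof.
have [->|x0] := eqVneq x 0.
  by rewrite mulmx0 /ss !big1 ?mulr0 // => i _; rewrite mxE expr0n.
set t := vnorm2 x.
have sspos : 0 < ss x.
  by rewrite lt_def ss_ge0 andbT; apply/eqP => /ss_eq0 h; rewrite h eqxx in x0.
have tpos : 0 < t by rewrite /t vnorm2E sqrtr_gt0.
have t2 : t ^+ 2 = ss x by rewrite /t vnorm2E sqr_sqrtr // ltW.
set x' := t^-1 *: x.
have ssx' : ss x' = 1.
  rewrite /ss; under eq_bigr do rewrite mxE exprMn.
  by rewrite -mulr_sumr -/(ss x) -t2 exprVn mulVf // expf_neq0 // gt_eqF.
have x'1 : vnorm2 x' = 1 by rewrite vnorm2E ssx' sqrtr1.
have := opnorm_ub N x'1.
have -> : vnorm2 (N *m x') = t^-1 * vnorm2 (N *m x).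
  rewrite !vnorm2E -scalemxAr /ss.
  under eq_bigr do rewrite mxE exprMn.
  by rewrite -mulr_sumr sqrtrM ?exprn_ge0 ?invr_ge0 ?ltW // sqrtr_sqr ger0_norm // invr_ge0 ltW.
move=> h.
have op0 : 0 <= opnorm2 N.
  apply: le_trans h; apply: mulr_ge0; first by rewrite invr_ge0 ltW.
  by rewrite vnorm2E sqrtr_ge0.
split=> [|//].
have h2 : vnorm2 (N *m x) <= opnorm2 N * t by rewrite -ler_pdivrMr // mulrC.
have := lerXn2r 2 _ _ h2; rewrite !nnegrE vnorm2E sqrtr_ge0.
have -> : 0 <= opnorm2 N * t by rewrite mulr_ge0 // ltW.
move=> /(_ isT isT).
by rewrite sqr_sqrtr ?ss_ge0 // exprMn t2.
Qed.

Lemma quad_real n (N : 'M[R]_n) c (a : 'I_n -> R) : 0 < c ->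
  (forall x : 'cV[R]_n, ss (N *m x) <= c ^+ 2 * ss x) ->
  `|\sum_i \sum_j a i * N i j * a j| <= c * \sum_i a i ^+ 2.
Proof.
move=> c0 hN.
set x := \col_i a i.
set Q := \sum_i \sum_j a i * N i j * a j.
set X := \sum_i a i ^+ 2.
set S := ss (N *m x).
have hX : ss x = X by apply: eq_bigr => i _; rewrite mxE.
have hQ : Q = \sum_i a i * (N *m x) i 0.
  apply: eq_bigr => i _; rewrite mxE mulr_sumr; apply: eq_bigr => j _.
  by rewrite mxE mulrA.
have hS : S <= c ^+ 2 * X by rewrite -hX; exact: hN.
have key (s : R) : s ^+ 2 = 1 -> s * Q <= c * X.
  move=> s2.
  have e : \sum_i (c * a i - s * (N *m x) i 0) ^+ 2 = c ^+ 2 * X - 2 * c * (s * Q) + s ^+ 2 * S.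
    rewrite hQ /X /S /ss !mulr_sumr -sumrB -big_split /=; apply: eq_bigr => i _.
    by ring.
  have : 0 <= \sum_i (c * a i - s * (N *m x) i 0) ^+ 2 by apply: sumr_ge0 => i _; rewrite sqr_ge0.
  rewrite e s2 mul1r => h.
  have h2 : 2 * c * (s * Q) <= 2 * c * (c * X) by lra.
  by rewrite ler_pM2l in h2; rewrite ?mulr_gt0.
rewrite ler_norml; apply/andP; split.
  by rewrite lerNl -mulN1r; apply: key; rewrite sqrrN expr1n.
by rewrite -[Q]mul1r; apply: key; rewrite expr1n.
Qed.

End Real.

Section Graph.
Variables (l : nat) (e : rel 'I_l).
Hypothesis ce : cluster_graph e.

Local Notation cl := (cluster_of e).

Lemma in_cl x y : (y \in cl x) = (y == x) || e x y.
Proof. by rewrite inE. Qed.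

Lemma cl_refl x : x \in cl x.
Proof. by rewrite in_cl eqxx. Qed.

Lemma cl_sym x y : (y \in cl x) = (x \in cl y).
Proof.
case: ce => [[_ esym] _]; rewrite !in_cl eq_sym.
by rewrite (esym x y).
Qed.

Lemma cl_trans x y z : y \in cl x -> z \in cl y -> z \in cl x.
Proof.
case: ce => [[_ _] etr]; rewrite !in_cl.
case/orP => [/eqP -> //| exy]; case/orP => [/eqP -> |eyz]; first by rewrite exy orbT.
have [//|zx] := eqVneq z x.
by rewrite (etr _ _ _ exy eyz) ?orbT // eq_sym.
Qed.

Lemma cl_eq x y : y \in cl x -> cl y = cl x.
Proof.
move=> yx; apply/setP => z; apply/idP/idP => h.
  exact: cl_trans yx h.
by apply: cl_trans h; rewrite cl_sym.
Qed.

Lemma card_cl x : #|cl x| = (deg e x).+1.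
Proof.
case: ce => [[eirr _] _].
have -> : cl x = x |: [set j | e x j].
  by apply/setP => y; rewrite !inE.
rewrite cardsU1 inE (eirr x) /deg add1n; congr (_.+1).
apply: eq_card => j; rewrite !inE /=. apply/idP/idP => h; [apply/asboolP | move: h => /asboolP]; done.
Qed.

Definition Qmx (R : realType) : 'M[R]_l :=
  \matrix_(i, j) ((j \in cl i)%:R / (#|cl i|)%:R).

Variable R : realType.

Lemma Lnrm_Q : Lnrm R e = 1%:M - Qmx R.
Proof.
case: ce => [[eirr esym] _].
apply/matrixP => i j.
rewrite /Lnrm /Cinvsqrt_mx mul_mx_diag mul_diag_mx !mxE.
have cdef k : (Num.sqrt ((deg e k)%:R + 1 : R))^-1 ^+ 2 = ((#|cl k|)%:R)^-1.
  by rewrite exprVn sqr_sqrtr ?addr_ge0 // card_cl -addn1 natrD.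
have cpos k : (0 : R) < (#|cl k|)%:R by rewrite card_cl ltr0n.
case: (eqVneq i j) => [<-|ij].
  rewrite cl_refl (eirr i) subr0 mulr1n mulrAC -expr2 cdef card_cl mulrSr.
  rewrite /=; field.
  by rewrite gt_eqF // ltr_wpDl ?ler0n ?ltr01.
rewrite mulr0n sub0r in_cl eq_sym (negbTE ij) /= sub0r.
case eij: (e i j); last by rewrite oppr0 mulr0 mul0r mul0r oppr0.
have jcl : j \in cl i by rewrite in_cl eij orbT.
have dj : deg e j = deg e i.
  by apply/eqP; rewrite -eqSS -!card_cl (cl_eq jcl).
rewrite dj /= mulr1n mulrN mulNr mulr1 mul1r -expr2 cdef //.
Qed.

Lemma Q_idem : Qmx R *m Qmx R = Qmx R.
Proof.
apply/matrixP => i j; rewrite !mxE.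
have cpos k : (#|cl k|)%:R != (0 : R) by rewrite card_cl pnatr_eq0.
transitivity (\sum_(k in cl i) (((j \in cl i)%:R : R) / (#|cl i|)%:R) / (#|cl i|)%:R).
  rewrite [RHS]big_mkcond /=; apply: eq_bigr => k _; rewrite !mxE.
  case: ifP => kin; last by rewrite mul0r mul0r.
  by rewrite (cl_eq kin) mul1r mulrC.
rewrite sumr_const -mulr_natr; field.
by rewrite cpos.
Qed.

Lemma Q_sym : (Qmx R)^T = Qmx R.
Proof.
apply/matrixP => i j; rewrite !mxE -cl_sym.
case h: (j \in cl i); last by rewrite !mul0r.
by rewrite (cl_eq h).
Qed.

Lemma Q_tr : \tr (Qmx R) = (#|clusters e|)%:R.
Proof.
rewrite /mxtrace.
under eq_bigr do rewrite mxE cl_refl mul1r.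
rewrite (partition_big_imset cl) /= -sum1_card natr_sum.
apply: eq_bigr => c /imsetP [x _ ->].
transitivity (\sum_(i in cl x) ((#|cl x|)%:R : R)^-1).
  apply: eq_big => i.
    apply/idP/idP => [/eqP h|h]; first by rewrite -h cl_refl.
    by apply/eqP; apply: cl_eq.
  by move=> /eqP ->.
by rewrite sumr_const -[_ *+ _]mulr_natr mulVf // card_cl pnatr_eq0.
Qed.

End Graph.

End Aux.
Import Aux.

Section Main.
Local Open Scope sesquilinear_scope.
Variable R : realType.
Local Notation C := (R[i]).
Local Notation toC := (real_complex R).

Lemma rank_idem_tr (F : numFieldType) n (A : 'M[F]_n) :
  A *m A = A -> (\rank A + \rank (1%:M - A)%R)%N = n.
Proof.
move=> AA.
have AA' : (1%:M - A) *m (1%:M - A) = 1%:M - A.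
  rewrite mulmxBl mulmxBr !mul1mx mulmxBr mulmx1 AA subrr subr0. done.
apply/eqP; rewrite -(eqr_nat F) natrD -!tr_idem //.
by rewrite raddfB /= mxtrace1 addrC subrK.
Qed.

Lemma count_trace n (r : 'I_n -> R) (p : pred R) :
  ((count p [seq r i | i <- enum 'I_n])%:R : C) = \sum_i ((p (r i))%:R : C).
Proof.
rewrite count_map -sum1_count natr_sum big_mkcond big_enum /=.
by apply: eq_big => // i _; case: (p (r i)).
Qed.

Lemma spec_idem n (P : 'M[C]_n) (g : 'I_n -> bool) :
  P \is unitarymx ->
  let E := P^t* *m diag_mx (\row_i ((g i)%:R : C)) *m P in
  E *m E = E /\ \tr E = \sum_i ((g i)%:R : C).
Proof.
move=> Pu E.
have PPt : P *m P^t* = 1%:M by apply/unitarymxP.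
split.
  rewrite /E !mulmxA -[_ *m P *m P^t*]mulmxA PPt mulmx1 -[P^t* *m _ *m diag_mx _]mulmxA mulmx_diag.
  congr (_ *m diag_mx _ *m _); apply/rowP => i; rewrite !mxE.
  by case: (g i); rewrite ?mulr1 ?mulr0.
rewrite /E mxtrace_mulC mulmxA PPt mul1mx mxtrace_diag.
by apply: eq_bigr => i _; rewrite mxE.
Qed.

Lemma N_complex n (N : 'M[R]_n) c (v : 'rV[C]_n) : N^T = N -> 0 < c ->
  (forall x, ss (N *m x) <= c ^+ 2 * ss x) ->
  exists qn nr, [/\ (v *m map_mx toC N *m v^t*) 0 0 = toC qn, (v *m v^t*) 0 0 = toC nr,
     `|qn| <= c * nr, 0 <= nr & (nr = 0 -> v = 0)].
Proof.
move=> NT c0 hN.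
set a := fun i => complex.Re (v 0 i); set b := fun i => complex.Im (v 0 i).
exists ((\sum_i \sum_j a i * N i j * a j) + (\sum_i \sum_j b i * N i j * b j)).
exists (\sum_i (a i ^+ 2 + b i ^+ 2)); split.
- exact: quadN.
- exact: nv_sum.
- rewrite big_split /= mulrDr; apply: le_trans (ler_normD _ _) _.
  by apply: lerD; apply: quad_real.
- by apply: sumr_ge0 => i _; rewrite addr_ge0 ?sqr_ge0.
- exact: nv_eq0.
Qed.

End Main.

Theorem lemma2 (R : realType) (l m : nat) (e : rel 'I_l) (N : 'M[R]_l) :
  cluster_graph e ->
  #|clusters e| = m ->
  N^T = N ->
  opnorm2 N < 1 / 2 ->
  (exists s : seq R, eigen_list (Lnrm R e + N) s) /\
  (forall s : seq R, eigen_list (Lnrm R e + N) s ->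
     count (fun x => x < 1 / 2) s = m).
Proof.
move=> ce cm NT hop.
Local Open Scope sesquilinear_scope.
set Q := Qmx e R.
have LQ : Lnrm R e = 1%:M - Q by rewrite Lnrm_Q.
set M := Lnrm R e + N.
have MT : M^T = M.
  rewrite /M LQ linearD /= linearB /= trmx1 (Q_sym ce). exact: (congr1 (fun X => 1%:M - Q + X) NT).
have [P [r [Pu Mdef]]] := sym_spectral MT.
have cp := char_poly_spec Pu Mdef.
set s0 := [seq r i | i <- enum 'I_l].
have es0 : eigen_list M s0.
  rewrite /eigen_list cp /s0 big_map big_enum /=.
  by apply: eq_bigl => i.
split; first by exists s0.
move=> s es.
have ps : perm_eq s s0 by apply: prod_XsubC_eq; rewrite -es -es0.
rewrite (permP ps).
set op := opnorm2 N.
set c := (Num.max op 0 + 1 / 2) / 2.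
have m0 : 0 <= Num.max op 0 by rewrite le_max lexx orbT.
have m1 : Num.max op 0 < 1 / 2 by rewrite gt_max hop /=; lra.
have mop : op <= Num.max op 0 by rewrite le_max lexx.
have c0 : 0 < c by rewrite /c; lra.
have c12 : c < 1 / 2 by rewrite /c; lra.
have hN : forall x : 'cV[R]_l, ss (N *m x) <= c ^+ 2 * ss x.
  move=> x; have [h1 h2] := opnorm_bound N x.
  have [->|x0] := eqVneq x 0.
    by rewrite mulmx0 /ss !big1 ?mulr0 // => i _; rewrite mxE expr0n.
  apply: le_trans h1 _; apply: ler_wpM2r; first exact: ss_ge0.
  apply: lerXn2r; rewrite ?nnegrE ?(h2 x0) ?ltW //.
  rewrite -/op /c; lra.
set g1 := fun i => r i < 1 / 2.
set g2 := fun i => ~~ (r i < 1 / 2).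
set E1 := P^t* *m diag_mx (\row_i ((g1 i)%:R : R[i])) *m P.
set E2 := P^t* *m diag_mx (\row_i ((g2 i)%:R : R[i])) *m P.
have [E1i E1t] := spec_idem g1 Pu.
have [E2i E2t] := spec_idem g2 Pu.
rewrite -/E1 in E1i E1t; rewrite -/E2 in E2i E2t.
have rE1 : \rank E1 = count (fun x => x < 1 / 2) s0.
  by apply: rank_idem => //; rewrite E1t count_trace.
have rE12 : (\rank E1 + \rank E2)%N = l.
  apply/eqP; rewrite -(eqr_nat R[i]) natrD -!tr_idem // E1t E2t -big_split /=.
  apply/eqP; transitivity (\sum_(i < l) (1 : R[i])).
    by apply: eq_bigr => i _; rewrite /g1 /g2; case: (r i < 1 / 2); rewrite /= ?addr0 ?add0r.
  by rewrite sumr_const card_ord.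
have Qi : Q *m Q = Q by exact: Q_idem.
have rQ : \rank Q = m by apply: rank_idem => //; rewrite Q_tr // cm.
have rQ2 := rank_idem_tr Qi.
set Qc := map_mx (real_complex R) Q; set Zc := map_mx (real_complex R) (1%:M - Q).
have rQc : \rank Qc = m by rewrite mxrank_map.
have rZc : \rank Zc = (l - m)%N.
  have := rQ2; rewrite rQ => h; rewrite mxrank_map -[X in (X - m)%N]h addKn //.
have Zi : Zc *m Zc = Zc.
  rewrite -map_mxM; congr (map_mx _ _).
  by rewrite mulmxBl mulmxBr !mul1mx mulmxBr mulmx1 Qi subrr subr0.
have QZ : Qc *m Zc = 0.
  by rewrite -map_mxM mulmxBr mulmx1 Qi subrr map_mx0.
have Mc : map_mx (real_complex R) M = Zc + map_mx (real_complex R) N by rewrite /M LQ map_mxD.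
have qfD (v : 'rV[R[i]]_l) : (v *m map_mx (real_complex R) M *m v^t*) 0 0 =
    (v *m Zc *m v^t*) 0 0 + (v *m map_mx (real_complex R) N *m v^t*) 0 0.
  by rewrite Mc mulmxDr mulmxDl mxE.
have key1 (v : 'rV[R[i]]_l) : v *m E1 = v -> v *m Zc = v -> v = 0.
  move=> vE vZ.
  have [ny [ny0 nyg hq hn]] := spec_quad r Pu vE.
  rewrite -Mdef qfD vZ in hq.
  have [qn [nr [hqn hnr qb nr0 nrv]]] := N_complex v NT c0 hN.
  rewrite hqn hnr -rmorphD in hq; move/complexI: hq => hq.
  rewrite hnr in hn; move/complexI: hn => hn.
  have hle : \sum_i r i * ny i <= 1 / 2 * \sum_i ny i.
    rewrite mulr_sumr; apply: ler_sum => i _.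
    case gi: (g1 i); last by rewrite nyg ?gi // !mulr0.
    by rewrite mulrC [_ * ny i]mulrC ler_wpM2l // ltW.
  apply: nrv; move: qb; rewrite ler_norml => /andP [qb1 qb2].
  rewrite -hn -hq in hle.
  nra.
have key2 (v : 'rV[R[i]]_l) : v *m E2 = v -> v *m Zc = 0 -> v = 0.
  move=> vE vZ.
  have [ny [ny0 nyg hq hn]] := spec_quad r Pu vE.
  rewrite -Mdef qfD vZ mul0mx mxE add0r in hq.
  have [qn [nr [hqn hnr qb nr0 nrv]]] := N_complex v NT c0 hN.
  rewrite hqn in hq; move/complexI: hq => hq.
  rewrite hnr in hn; move/complexI: hn => hn.
  have hle : 1 / 2 * \sum_i ny i <= \sum_i r i * ny i.
    rewrite mulr_sumr; apply: ler_sum => i _.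
    case gi: (g2 i); last by rewrite nyg ?gi // !mulr0.
    rewrite mulrC [r i * _]mulrC ler_wpM2l //.
    by move: gi; rewrite /g2 leNgt.
  apply: nrv; move: qb; rewrite ler_norml => /andP [qb1 qb2].
  rewrite -hn -hq in hle.
  nra.
have d1 : (E1 :&: Zc)%MS = 0.
  apply/eqP/rowV0P => v; rewrite sub_capmx => /andP [/submxP [w1 ->] /submxP [w2 hv2]].
  apply: key1; first by rewrite -mulmxA E1i.
  by rewrite hv2 -mulmxA Zi.
have d2 : (E2 :&: Qc)%MS = 0.
  apply/eqP/rowV0P => v; rewrite sub_capmx => /andP [/submxP [w1 ->] /submxP [w2 hv2]].
  apply: key2; first by rewrite -mulmxA E2i.
  by rewrite hv2 -mulmxA QZ mulmx0.
have h1 := mxrank_disjoint_sum d1.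
have h2 := mxrank_disjoint_sum d2.
have l1 := rank_leq_col (E1 + Zc)%MS.
have l2 := rank_leq_col (E2 + Qc)%MS.
rewrite h1 rZc in l1; rewrite h2 rQc in l2.
rewrite -rE1.
have mle : (m <= l)%N by rewrite -rQ; exact: rank_leq_col.
lia.
Qed.
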